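(* Let $(A,\succ,\prec)$ be a Leibniz-dendriform algebra and $r=\sum_i a_i\otimes b_i\in A\otimes A$ such that $r+\tau(r)$ is invariant. Then the following are equivalent: (a) $S(r)=0$; (b) $S_1(r)=0$; (c) $S_3(r)=0$; (d) $S_4(r)=0$; (e) $S(\tau(r))=0$, where $S(r)=\sum_{i,j}\big(a_i\otimes a_j\otimes (b_j\circ b_i)-a_i\otimes (b_i\odot a_j)\otimes b_j-(a_i\succ a_j)\otimes b_i\otimes b_j\big)$, $S_1(r)=\sum_{i,j}\big((a_i\odot a_j)\otimes b_i\otimes b_j+a_i\otimes a_j\otimes(b_i\circ b_j)+a_i\otimes(b_i\succ a_j)\otimes b_j\big)$, $S_3(r)=\sum_{i,j}\big(a_j\otimes(a_i\odot b_j)\otimes b_i+a_j\otimes a_i\otimes(b_i\succ b_j)-(a_i\circ a_j)\otimes b_i\otimes b_j\big)$, $S_4(r)=\sum_{i,j}\big(-(a_i\odot a_j)\otimes b_j\otimes b_i+a_i\otimes(b_i\circ a_j)\otimes b_j+a_i\otimes a_j\otimes(b_i\succ b_j)\big)$, and $S(\tau(r))=\sum_{i,j}\big(b_i\otimes b_j\otimes(a_j\circ a_i)-b_i\otimes(a_i\odot b_j)\otimes a_j-(b_i\succ b_j)\otimes a_i\otimes a_j\big)$.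
   Context: $\tau(a\otimes b)=b\otimes a$, $I$ is the identity. A Leibniz-dendriform algebra is a vector space $A$ with bilinear operations $\succ,\prec$ such that, with $x\circ y:=x\succ y+x\prec y$, for all $x,y,z$: $(x\circ y)\succ z=x\succ(y\succ z)-y\succ(x\succ z)$, $y\prec(x\circ z)+(x\succ y)\prec z=x\succ(y\prec z)$, $x\prec(y\circ z)=(x\prec y)\prec z+y\succ(x\prec z)$. Write $x\odot y:=x\succ y+y\prec x$, $x\star y:=x\circ y+y\circ x$; $L_*(x)y=x*y$, $R_*(x)y=y*x$; $L_\odot:=L_\succ+R_\prec$, $L_\star:=L_\circ+R_\circ$. An element $s\in A\otimes A$ is invariant if for all $x\in A$: $(L_\odot(x)\otimes I-I\otimes R_\circ(x))s=0$ and $(L_\star(x)\otimes I-I\otimes R_\prec(x))\tau(s)=0$. *)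

(* Defs.v *)
From HB Require Import structures.
From mathcomp Require Import all_boot all_order all_algebra.
Set Implicit Arguments. Unset Strict Implicit. Unset Printing Implicit Defensive.
Import GRing.Theory.
Local Open Scope ring_scope.

(* Tensors in A⊗A (resp. A⊗A⊗A) are handled through the universal property of the
   tensor product: a finite formal sum  Σ a_i ⊗ b_i  is zero in A⊗A iff its image
   under every bilinear map A×A → W (W any K-vector space) is zero. *)

Section LDend.
Variables (K : fieldType) (A : lmodType K).

Definition bilinear_map (W : lmodType K) (phi : A -> A -> W) : Prop :=
  (forall (c : K) x x' y, phi (c *: x + x') y = c *: phi x y + phi x' y) /\
  (forall (c : K) x y y', phi x (c *: y + y') = c *: phi x y + phi x y').

Definition trilinear_map (W : lmodType K) (phi : A -> A -> A -> W) : Prop :=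
  (forall (c : K) x x' y z, phi (c *: x + x') y z = c *: phi x y z + phi x' y z) /\
  (forall (c : K) x y y' z, phi x (c *: y + y') z = c *: phi x y z + phi x y' z) /\
  (forall (c : K) x y z z', phi x y (c *: z + z') = c *: phi x y z + phi x y z').

Variables (succ prec : A -> A -> A).

Definition circ x y := succ x y + prec x y.
Definition odot x y := succ x y + prec y x.
Definition star x y := circ x y + circ y x.

Definition is_LD_algebra : Prop :=
  bilinear_map succ /\ bilinear_map prec /\
  (forall x y z, succ (circ x y) z = succ x (succ y z) - succ y (succ x z)) /\
  (forall x y z, prec y (circ x z) + prec (succ x y) z = succ x (prec y z)) /\
  (forall x y z, prec x (circ y z) = prec (prec x y) z + succ y (prec x z)).

Definition tensor2_zero (t : forall W : lmodType K, (A -> A -> W) -> W) : Prop :=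
  forall (W : lmodType K) (phi : A -> A -> W), bilinear_map phi -> t W phi = 0.

Definition tensor3_zero (t : forall W : lmodType K, (A -> A -> A -> W) -> W) : Prop :=
  forall (W : lmodType K) (phi : A -> A -> A -> W), trilinear_map phi -> t W phi = 0.

(* τ on a formal sum r = Σ_i a_i ⊗ b_i, represented as the list of pairs (a_i, b_i) *)
Definition tau (r : seq (A * A)) : seq (A * A) := [seq (p.2, p.1) | p <- r].

Definition LD_invariant (s : seq (A * A)) : Prop :=
  forall x : A,
    tensor2_zero (fun (W : lmodType K) (phi : A -> A -> W) =>
      \sum_(p <- s) (phi (odot x p.1) p.2 - phi p.1 (circ p.2 x))) /\
    tensor2_zero (fun (W : lmodType K) (phi : A -> A -> W) =>
      \sum_(p <- tau s) (phi (star x p.1) p.2 - phi p.1 (prec p.2 x))).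

(* For p = (a_i, b_i), q = (a_j, b_j). *)
Definition S_ (r : seq (A * A)) (W : lmodType K) (phi : A -> A -> A -> W) : W :=
  \sum_(p <- r) \sum_(q <- r)
    (phi p.1 q.1 (circ q.2 p.2) - phi p.1 (odot p.2 q.1) q.2 - phi (succ p.1 q.1) p.2 q.2).

Definition S1_ (r : seq (A * A)) (W : lmodType K) (phi : A -> A -> A -> W) : W :=
  \sum_(p <- r) \sum_(q <- r)
    (phi (odot p.1 q.1) p.2 q.2 + phi p.1 q.1 (circ p.2 q.2) + phi p.1 (succ p.2 q.1) q.2).

Definition S3_ (r : seq (A * A)) (W : lmodType K) (phi : A -> A -> A -> W) : W :=
  \sum_(p <- r) \sum_(q <- r)
    (phi q.1 (odot p.1 q.2) p.2 + phi q.1 p.1 (succ p.2 q.2) - phi (circ p.1 q.1) p.2 q.2).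

Definition S4_ (r : seq (A * A)) (W : lmodType K) (phi : A -> A -> A -> W) : W :=
  \sum_(p <- r) \sum_(q <- r)
    (- phi (odot p.1 q.1) q.2 p.2 + phi p.1 (circ p.2 q.1) q.2 + phi p.1 q.1 (succ p.2 q.2)).

End LDend.

(* Main.v *)
Require Import Defs.
From HB Require Import structures.
From mathcomp Require Import all_boot all_order all_algebra.
Set Implicit Arguments. Unset Strict Implicit. Unset Printing Implicit Defensive.
Import GRing.Theory.
Local Open Scope ring_scope.
Inductive zexpr := ZAtom of nat | ZAdd of zexpr & zexpr | ZOpp of zexpr | ZZ.

Section ZE.
Variables (V : zmodType) (f : nat -> V).
Fixpoint zeval e : V := match e with
  | ZAtom j => f j | ZAdd a b => zeval a + zeval b | ZOpp a => - zeval a | ZZ => 0 end.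
Fixpoint zlin e (k : nat) : int := match e with
  | ZAtom j => ((j == k) : nat)%:Z | ZAdd a b => zlin a k + zlin b k
  | ZOpp a => - zlin a k | ZZ => 0 end.
Fixpoint zmax e : nat := match e with
  | ZAtom j => j | ZAdd a b => maxn (zmax a) (zmax b) | ZOpp a => zmax a | ZZ => 0 end.

Lemma zeval_sum n e : (zmax e < n)%N -> zeval e = \sum_(k < n) f k *~ zlin e k.
Proof.
elim: e => [j|a IHa b IHb|a IHa|] /=.
- move=> jn; rewrite (bigD1 (Ordinal jn)) //= eqxx mulr1z big1 ?addr0 // => k.
  by rewrite -val_eqE /= eq_sym => /negbTE ->; rewrite mulr0z.
- rewrite gtn_max => /andP[/IHa -> /IHb ->]; rewrite -big_split /=.
  by apply: eq_bigr => k _; rewrite mulrzDr.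
- by move=> /IHa ->; rewrite -sumrN; apply: eq_bigr => k _; rewrite mulrNz.
- by move=> _; rewrite big1 // => k _; rewrite mulr0z.
Qed.

Lemma zsound n e1 e2 : (zmax e1 < n)%N -> (zmax e2 < n)%N ->
  all (fun k => zlin e1 k == zlin e2 k) (iota 0 n) -> zeval e1 = zeval e2.
Proof.
move=> h1 h2 /allP H; rewrite (zeval_sum h1) (zeval_sum h2).
apply: eq_bigr => k _; congr (_ *~ _); apply/eqP/H.
by rewrite mem_iota /= ltn_ord.
Qed.
End ZE.

Ltac zlookup x env :=
  match env with
  | x :: _ => constr:(0%N)
  | _ :: ?l => let n := zlookup x l in constr:(S n)
  end.
Ltac zlen env :=
  match env with
  | nil => constr:(0%N)
  | _ :: ?l => let n := zlen l in constr:(S n)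
  end.
Ltac zapp env e :=
  lazymatch env with
  | nil => constr:([:: e])
  | ?x :: ?l => let l' := zapp l e in constr:(x :: l')
  end.
Ltac zreify e env :=
  lazymatch e with
  | @Algebra.add _ ?a ?b =>
      let r1 := zreify a env in
      lazymatch r1 with (?e1, ?env1) =>
      let r2 := zreify b env1 in
      lazymatch r2 with (?e2, ?env2) => constr:((ZAdd e1 e2, env2)) end end
  | @Algebra.opp _ ?a =>
      let r1 := zreify a env in
      lazymatch r1 with (?e1, ?env1) => constr:((ZOpp e1, env1)) end
  | @Algebra.zero _ => constr:((ZZ, env))
  | _ =>
      match constr:(tt) with
      | _ => let n := zlookup e env in constr:((ZAtom n, env))
      | _ => let n := zlen env in let env' := zapp env e in constr:((ZAtom n, env'))
      end
  end.
Ltac zmod_eq :=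
  lazymatch goal with |- ?l = ?r :> ?V =>
  let r1 := zreify l (@nil V) in
  lazymatch r1 with (?e1, ?env1) =>
  let r2 := zreify r env1 in
  lazymatch r2 with (?e2, ?env2) =>
  let env3 := env2 in
  let n := zlen env3 in
  change (zeval (nth 0 env3) e1 = zeval (nth 0 env3) e2);
  apply: (@zsound _ _ n); vm_compute; reflexivity
  end end end.


Section Aux.
Variables (K : fieldType) (A : lmodType K) (succ prec : A -> A -> A).

Lemma triD1 (W : lmodType K) (phi : A -> A -> A -> W) : trilinear_map phi ->
  forall x x' y z, phi (x + x') y z = phi x y z + phi x' y z.
Proof. by case=> h _ x x' y z; have := h 1 x x' y z; rewrite !scale1r. Qed.
Lemma triD2 (W : lmodType K) (phi : A -> A -> A -> W) : trilinear_map phi ->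
  forall x y y' z, phi x (y + y') z = phi x y z + phi x y' z.
Proof. by case=> _ [h _] x y y' z; have := h 1 x y y' z; rewrite !scale1r. Qed.
Lemma triD3 (W : lmodType K) (phi : A -> A -> A -> W) : trilinear_map phi ->
  forall x y z z', phi x y (z + z') = phi x y z + phi x y z'.
Proof. by case=> _ [_ h] x y z z'; have := h 1 x y z z'; rewrite !scale1r. Qed.

Lemma dsum_cancel (W : zmodType) (r : seq (A * A)) (F G : A * A -> A * A -> W) :
  (forall p q, F p q = G p q - G q p) ->
  \sum_(p <- r) \sum_(q <- r) F p q = 0.
Proof.
move=> H.
rewrite (eq_bigr (fun p => \sum_(q <- r) G p q - \sum_(q <- r) G q p)); last first.
  by move=> p _; rewrite -sumrB; apply: eq_bigr => q _; apply: H.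
by rewrite sumrB exchange_big subrr.
Qed.

Lemma rel1 (r : seq (A * A)) (W : lmodType K) (B : A * A -> A -> A -> W) (X : A * A -> A) :
  LD_invariant succ prec (r ++ tau r) -> (forall p, bilinear_map (B p)) ->
  \sum_(p <- r) \sum_(q <- r)
    ((B p (odot succ prec (X p) q.1) q.2 - B p q.1 (circ succ prec q.2 (X p))) +
     (B p (odot succ prec (X p) q.2) q.1 - B p q.2 (circ succ prec q.1 (X p)))) = 0.
Proof.
move=> Hinv Hb; apply: big1 => p _.
have := (Hinv (X p)).1 W (B p) (Hb p).
by rewrite big_cat big_map /= => H; rewrite big_split.
Qed.

Lemma rel2 (r : seq (A * A)) (W : lmodType K) (B : A * A -> A -> A -> W) (X : A * A -> A) :
  LD_invariant succ prec (r ++ tau r) -> (forall p, bilinear_map (B p)) ->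
  \sum_(p <- r) \sum_(q <- r)
    ((B p (star succ prec (X p) q.2) q.1 - B p q.2 (prec q.1 (X p))) +
     (B p (star succ prec (X p) q.1) q.2 - B p q.1 (prec q.2 (X p)))) = 0.
Proof.
move=> Hinv Hb; apply: big1 => p _.
have := (Hinv (X p)).2 W (B p) (Hb p).
rewrite /tau map_cat big_cat !big_map /= => H; rewrite big_split /=.
by rewrite -[RHS]H.
Qed.

Lemma S_tau (W : lmodType K) (phi : A -> A -> A -> W) r :
  S_ succ prec (tau r) phi = \sum_(p <- r) \sum_(q <- r)
    (phi p.2 q.2 (circ succ prec q.1 p.1) - phi p.2 (odot succ prec p.1 q.2) q.1
     - phi (succ p.2 q.2) p.1 q.1).
Proof.
rewrite /S_ /tau big_map; apply: eq_bigr => p _; by rewrite big_map.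
Qed.

End Aux.

Ltac tri_tac Hphi :=
  let h1 := fresh "h" in let h2 := fresh "h" in let h3 := fresh "h" in
  case: (Hphi) => h1 [h2 h3];
  first [ split; [|split] => c x y z w /=; by rewrite ?h1 ?h2 ?h3
        | split => c x y z /=; by rewrite ?h1 ?h2 ?h3 ].

Lemma subeq0 (W : zmodType) (x y : W) : y = 0 -> x - y = 0 -> x = 0.
Proof. by move=> ->; rewrite subr0. Qed.
Lemma addeq0 (W : zmodType) (x y : W) : y = 0 -> x + y = 0 -> x = 0.
Proof. by move=> ->; rewrite addr0. Qed.
Lemma S1fromS (K : fieldType) (A : lmodType K) (succ prec : A -> A -> A) (r : seq (A * A)) :
  LD_invariant succ prec (r ++ tau r) ->
  tensor3_zero (fun W (phi : A -> A -> A -> W) => S_ succ prec r phi) -> tensor3_zero (fun W (phi : A -> A -> A -> W) => S1_ succ prec r phi).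
Proof.
move=> Hinv HS W phi Hphi /=.
have H0 := HS W _ (ltac:(tri_tac Hphi) : trilinear_map (fun x0 x1 x2 => phi x1 x0 x2)); rewrite /= in H0.
apply: (subeq0 H0).
have H1 := @rel1 K A succ prec r W (fun (p : A * A) (u v : A) => phi u v p.2) (fun p => p.1) Hinv (fun p => ltac:(tri_tac Hphi)).
apply: (addeq0 H1).
have H2 := @rel2 K A succ prec r W (fun (p : A * A) (u v : A) => phi u v p.2) (fun p => p.1) Hinv (fun p => ltac:(tri_tac Hphi)).
apply: (subeq0 H2).
rewrite ?S_tau /S_ /S1_ /S3_ /S4_.
repeat (rewrite -sumrB || rewrite -big_split).
under eq_bigr => p _ do repeat (rewrite -sumrB || rewrite -big_split).
apply: (@dsum_cancel _ _ _ r _ (fun p q => phi (prec q.1 p.1) p.2 q.2 - phi q.1 p.1 (succ q.2 p.2) - phi q.1 p.1 (prec q.2 p.2) + phi (prec q.1 p.2) p.1 q.2 - phi q.1 (succ q.2 p.1) p.2 - phi q.2 (succ q.1 p.1) p.2 - phi (succ q.1 p.1) q.2 p.2 - phi (succ q.2 p.1) q.1 p.2)) => p q /=.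
rewrite /circ /odot /star.
rewrite !(triD1 Hphi, triD2 Hphi, triD3 Hphi).
zmod_eq.
Qed.

Lemma S4fromS1 (K : fieldType) (A : lmodType K) (succ prec : A -> A -> A) (r : seq (A * A)) :
  LD_invariant succ prec (r ++ tau r) ->
  tensor3_zero (fun W (phi : A -> A -> A -> W) => S1_ succ prec r phi) -> tensor3_zero (fun W (phi : A -> A -> A -> W) => S4_ succ prec r phi).
Proof.
move=> Hinv HS W phi Hphi /=.
have H0 := HS W _ (ltac:(tri_tac Hphi) : trilinear_map (fun x0 x1 x2 => phi x0 x2 x1)); rewrite /= in H0.
apply: (addeq0 H0).
have H1 := @rel2 K A succ prec r W (fun (p : A * A) (u v : A) => phi p.1 u v) (fun p => p.2) Hinv (fun p => ltac:(tri_tac Hphi)).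
apply: (subeq0 H1).
have H2 := @rel1 K A succ prec r W (fun (p : A * A) (u v : A) => phi p.1 v u) (fun p => p.2) Hinv (fun p => ltac:(tri_tac Hphi)).
apply: (subeq0 H2).
rewrite ?S_tau /S_ /S1_ /S3_ /S4_.
repeat (rewrite -sumrB || rewrite -big_split).
under eq_bigr => p _ do repeat (rewrite -sumrB || rewrite -big_split).
apply: (@dsum_cancel _ _ _ r _ (fun p q => 0)) => p q /=.
rewrite /circ /odot /star.
rewrite !(triD1 Hphi, triD2 Hphi, triD3 Hphi).
zmod_eq.
Qed.

Lemma S3fromS4 (K : fieldType) (A : lmodType K) (succ prec : A -> A -> A) (r : seq (A * A)) :
  LD_invariant succ prec (r ++ tau r) ->
  tensor3_zero (fun W (phi : A -> A -> A -> W) => S4_ succ prec r phi) -> tensor3_zero (fun W (phi : A -> A -> A -> W) => S3_ succ prec r phi).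
Proof.
move=> Hinv HS W phi Hphi /=.
have H0 := HS W _ (ltac:(tri_tac Hphi) : trilinear_map (fun x0 x1 x2 => phi x1 x0 x2)); rewrite /= in H0.
apply: (subeq0 H0).
have H1 := @rel1 K A succ prec r W (fun (p : A * A) (u v : A) => phi v u p.2) (fun p => p.1) Hinv (fun p => ltac:(tri_tac Hphi)).
apply: (subeq0 H1).
rewrite ?S_tau /S_ /S1_ /S3_ /S4_.
repeat (rewrite -sumrB || rewrite -big_split).
under eq_bigr => p _ do repeat (rewrite -sumrB || rewrite -big_split).
apply: (@dsum_cancel _ _ _ r _ (fun p q => phi (succ q.2 p.1) q.1 p.2 + phi (prec q.2 p.1) q.1 p.2 + phi (succ q.1 p.1) q.2 p.2 + phi (prec q.1 p.1) q.2 p.2)) => p q /=.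
rewrite /circ /odot /star.
rewrite !(triD1 Hphi, triD2 Hphi, triD3 Hphi).
zmod_eq.
Qed.

Lemma S4fromS3 (K : fieldType) (A : lmodType K) (succ prec : A -> A -> A) (r : seq (A * A)) :
  LD_invariant succ prec (r ++ tau r) ->
  tensor3_zero (fun W (phi : A -> A -> A -> W) => S3_ succ prec r phi) -> tensor3_zero (fun W (phi : A -> A -> A -> W) => S4_ succ prec r phi).
Proof.
move=> Hinv HS W phi Hphi /=.
have H0 := HS W _ (ltac:(tri_tac Hphi) : trilinear_map (fun x0 x1 x2 => phi x1 x0 x2)); rewrite /= in H0.
apply: (subeq0 H0).
have H1 := @rel1 K A succ prec r W (fun (p : A * A) (u v : A) => phi u v p.2) (fun p => p.1) Hinv (fun p => ltac:(tri_tac Hphi)).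
apply: (addeq0 H1).
rewrite ?S_tau /S_ /S1_ /S3_ /S4_.
repeat (rewrite -sumrB || rewrite -big_split).
under eq_bigr => p _ do repeat (rewrite -sumrB || rewrite -big_split).
apply: (@dsum_cancel _ _ _ r _ (fun p q => 0 - phi q.1 (succ q.2 p.1) p.2 - phi q.1 (prec q.2 p.1) p.2 - phi q.2 (succ q.1 p.1) p.2 - phi q.2 (prec q.1 p.1) p.2)) => p q /=.
rewrite /circ /odot /star.
rewrite !(triD1 Hphi, triD2 Hphi, triD3 Hphi).
zmod_eq.
Qed.

Lemma StfromS4 (K : fieldType) (A : lmodType K) (succ prec : A -> A -> A) (r : seq (A * A)) :
  LD_invariant succ prec (r ++ tau r) ->
  tensor3_zero (fun W (phi : A -> A -> A -> W) => S4_ succ prec r phi) -> tensor3_zero (fun W (phi : A -> A -> A -> W) => S_ succ prec (tau r) phi).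
Proof.
move=> Hinv HS W phi Hphi /=.
have H0 := HS W _ (ltac:(tri_tac Hphi) : trilinear_map (fun x0 x1 x2 => phi x2 x0 x1)); rewrite /= in H0.
apply: (addeq0 H0).
have H1 := @rel1 K A succ prec r W (fun (p : A * A) (u v : A) => phi p.2 u v) (fun p => p.1) Hinv (fun p => ltac:(tri_tac Hphi)).
apply: (addeq0 H1).
rewrite ?S_tau /S_ /S1_ /S3_ /S4_.
repeat (rewrite -sumrB || rewrite -big_split).
under eq_bigr => p _ do repeat (rewrite -sumrB || rewrite -big_split).
apply: (@dsum_cancel _ _ _ r _ (fun p q => phi q.2 p.1 (succ p.2 q.1) + phi q.2 p.1 (prec p.2 q.1))) => p q /=.
rewrite /circ /odot /star.
rewrite !(triD1 Hphi, triD2 Hphi, triD3 Hphi).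
zmod_eq.
Qed.

Lemma S3fromSt (K : fieldType) (A : lmodType K) (succ prec : A -> A -> A) (r : seq (A * A)) :
  LD_invariant succ prec (r ++ tau r) ->
  tensor3_zero (fun W (phi : A -> A -> A -> W) => S_ succ prec (tau r) phi) -> tensor3_zero (fun W (phi : A -> A -> A -> W) => S3_ succ prec r phi).
Proof.
move=> Hinv HS W phi Hphi /=.
have H0 := HS W _ (ltac:(tri_tac Hphi) : trilinear_map (fun x0 x1 x2 => phi x2 x1 x0)); rewrite /= in H0.
apply: (addeq0 H0).
rewrite ?S_tau /S_ /S1_ /S3_ /S4_.
repeat (rewrite -sumrB || rewrite -big_split).
under eq_bigr => p _ do repeat (rewrite -sumrB || rewrite -big_split).
apply: (@dsum_cancel _ _ _ r _ (fun p q => phi (succ q.1 p.1) q.2 p.2 + phi (prec q.1 p.1) q.2 p.2)) => p q /=.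
rewrite /circ /odot /star.
rewrite !(triD1 Hphi, triD2 Hphi, triD3 Hphi).
zmod_eq.
Qed.

Lemma S1fromS4 (K : fieldType) (A : lmodType K) (succ prec : A -> A -> A) (r : seq (A * A)) :
  LD_invariant succ prec (r ++ tau r) ->
  tensor3_zero (fun W (phi : A -> A -> A -> W) => S4_ succ prec r phi) -> tensor3_zero (fun W (phi : A -> A -> A -> W) => S1_ succ prec r phi).
Proof.
move=> Hinv HS W phi Hphi /=.
have H0 := HS W _ (ltac:(tri_tac Hphi) : trilinear_map (fun x0 x1 x2 => phi x0 x2 x1)); rewrite /= in H0.
apply: (addeq0 H0).
have H1 := @rel1 K A succ prec r W (fun (p : A * A) (u v : A) => phi p.1 u v) (fun p => p.2) Hinv (fun p => ltac:(tri_tac Hphi)).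
apply: (subeq0 H1).
have H2 := @rel2 K A succ prec r W (fun (p : A * A) (u v : A) => phi p.1 v u) (fun p => p.2) Hinv (fun p => ltac:(tri_tac Hphi)).
apply: (subeq0 H2).
rewrite ?S_tau /S_ /S1_ /S3_ /S4_.
repeat (rewrite -sumrB || rewrite -big_split).
under eq_bigr => p _ do repeat (rewrite -sumrB || rewrite -big_split).
apply: (@dsum_cancel _ _ _ r _ (fun p q => 0)) => p q /=.
rewrite /circ /odot /star.
rewrite !(triD1 Hphi, triD2 Hphi, triD3 Hphi).
zmod_eq.
Qed.

Lemma SfromS1 (K : fieldType) (A : lmodType K) (succ prec : A -> A -> A) (r : seq (A * A)) :
  LD_invariant succ prec (r ++ tau r) ->
  tensor3_zero (fun W (phi : A -> A -> A -> W) => S1_ succ prec r phi) -> tensor3_zero (fun W (phi : A -> A -> A -> W) => S_ succ prec r phi).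
Proof.
move=> Hinv HS W phi Hphi /=.
have H0 := HS W _ (ltac:(tri_tac Hphi) : trilinear_map (fun x0 x1 x2 => phi x1 x0 x2)); rewrite /= in H0.
apply: (subeq0 H0).
have H1 := @rel1 K A succ prec r W (fun (p : A * A) (u v : A) => phi v u p.2) (fun p => p.1) Hinv (fun p => ltac:(tri_tac Hphi)).
apply: (subeq0 H1).
have H2 := @rel2 K A succ prec r W (fun (p : A * A) (u v : A) => phi v u p.2) (fun p => p.1) Hinv (fun p => ltac:(tri_tac Hphi)).
apply: (addeq0 H2).
rewrite ?S_tau /S_ /S1_ /S3_ /S4_.
repeat (rewrite -sumrB || rewrite -big_split).
under eq_bigr => p _ do repeat (rewrite -sumrB || rewrite -big_split).
apply: (@dsum_cancel _ _ _ r _ (fun p q => 0 - phi q.1 p.1 (succ p.2 q.2) - phi q.1 p.1 (prec p.2 q.2) + phi (succ q.2 p.1) q.1 p.2 + phi (succ q.1 p.1) q.2 p.2 + phi q.2 (prec p.1 q.1) p.2 + phi q.2 (succ q.1 p.1) p.2 + phi q.1 (prec p.1 q.2) p.2 + phi q.1 (succ q.2 p.1) p.2)) => p q /=.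
rewrite /circ /odot /star.
rewrite !(triD1 Hphi, triD2 Hphi, triD3 Hphi).
zmod_eq.
Qed.

Theorem mainTheorem6 (K : fieldType) (A : lmodType K) (succ prec : A -> A -> A)
    (r : seq (A * A)) :
  is_LD_algebra succ prec ->
  LD_invariant succ prec (r ++ tau r) ->
  [<-> tensor3_zero (S_ succ prec r);
       tensor3_zero (S1_ succ prec r);
       tensor3_zero (S3_ succ prec r);
       tensor3_zero (S4_ succ prec r);
       tensor3_zero (S_ succ prec (tau r))].
Proof.
move=> _ Hinv.
do ![split] => H.
- exact: S1fromS Hinv H.
- exact: S3fromS4 Hinv (S4fromS1 Hinv H).
- exact: S4fromS3 Hinv H.
- exact: StfromS4 Hinv H.
- exact: SfromS1 Hinv (S1fromS4 Hinv (S4fromS3 Hinv (S3fromSt Hinv H))).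
Qed.
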